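(* If $(T,X)$ is a uniformly left-syndetically stable compact flow ($T$ a Hausdorff topological group, $X$ compact Hausdorff), then $(T,X)$ is an a.p. flow.
   Context: $\mathscr U_X$ is the uniformity of $X$; for $A\subseteq T$ and $\delta\in\mathscr U_X$, $A\delta=\{(ax,ay):a\in A,(x,y)\in\delta\}$. $A\subseteq T$ is left-syndetic if there is a compact $K\subseteq T$ with $A\cap tK\neq\emptyset$ for all $t\in T$; $A$ is (right) syndetic if there is compact $K$ with $Kt\cap A\neq\emptyset$ for all $t$. $(T,X)$ is uniformly left-syndetically stable if for every $\varepsilon\in\mathscr U_X$ there exist $\delta\in\mathscr U_X$ and a left-syndetic $A\subseteq T$ with $A\delta\subseteq\varepsilon$. A flow is an a.p. flow if for every $\alpha\in\mathscr U_X$ there is a syndetic $A\subseteq T$ with $Ax\subseteq\alpha[x]$ for all $x\in X$. *)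

(* Defs.v *)
From HB Require Import structures.
From mathcomp Require Import all_boot all_order all_algebra.
From mathcomp Require Import all_classical all_reals all_analysis.
Set Implicit Arguments. Unset Strict Implicit. Unset Printing Implicit Defensive.
Local Open Scope classical_set_scope.

Definition is_topological_group (T : topologicalType)
    (mul : T -> T -> T) (inv : T -> T) (e : T) : Prop :=
  [/\ (forall a b c, mul a (mul b c) = mul (mul a b) c),
      (forall a, mul e a = a /\ mul a e = a),
      (forall a, mul (inv a) a = e /\ mul a (inv a) = e),
      continuous (fun p : T * T => mul p.1 p.2)
    & continuous inv].

Definition is_flow (T X : topologicalType) (mul : T -> T -> T) (e : T)
    (act : T -> X -> X) : Prop :=
  [/\ continuous (fun p : T * X => act p.1 p.2),
      (forall x, act e x = x)
    & (forall s t x, act (mul s t) x = act s (act t x))].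

Definition left_syndetic (T : topologicalType) (mul : T -> T -> T)
    (A : set T) : Prop :=
  exists K : set T, compact K /\
    forall t, A `&` [set mul t k | k in K] !=set0.

Definition syndetic (T : topologicalType) (mul : T -> T -> T)
    (A : set T) : Prop :=
  exists K : set T, compact K /\
    forall t, [set mul k t | k in K] `&` A !=set0.

Definition unif_left_synd_stable (T : topologicalType) (X : uniformType)
    (mul : T -> T -> T) (act : T -> X -> X) : Prop :=
  forall eps : set (X * X), entourage eps ->
    exists delta : set (X * X), entourage delta /\
      exists A : set T, left_syndetic mul A /\
        forall a x y, A a -> delta (x, y) -> eps (act a x, act a y).

Definition ap_flow (T : topologicalType) (X : uniformType)
    (mul : T -> T -> T) (act : T -> X -> X) : Prop :=
  forall alpha : set (X * X), entourage alpha ->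
    exists A : set T, syndetic mul A /\
      forall x a, A a -> alpha (x, act a x).

(* Main.v *)
Require Import Defs.
From mathcomp Require Import all_boot all_order all_algebra.
From mathcomp Require Import all_classical all_reals all_analysis.
From mathcomp Require Import finmap.
Local Open Scope classical_set_scope.

Lemma net_lemma (X : uniformType) (D : set (X * X)) :
  compact [set: X] -> entourage D ->
  exists S : {fset X}, forall x, exists s : S, D (val s, x).
Proof.
move=> cX eD; move/compact_near_coveringP: cX => cX.
pose F := filter_from [set: {fset X}]
  (fun A : {fset X} => [set S : {fset X} | (A `<=` S)%fset]).
have FF : Filter F.
  apply: filter_from_filter; first by exists fset0.
  move=> A B _ _; exists (A `|` B)%fset => // S /= HS; split.
    exact: fsubset_trans (fsubsetUl _ _) HS.
  exact: fsubset_trans (fsubsetUr _ _) HS.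
have := cX {fset X} F (fun S x' => exists2 s, s \in S & D (s, x')) FF.
case.
  move=> x _; near=> x' S.
  exists x; last first.
    by apply/xsectionP; near: x'; exact: nbhs_entourage.
  rewrite /= -fsub1set; near: S; by exists [fset x]%fset.
move=> A _ HA; exists A => x.
have [s sA Ds] := HA A (fsubset_refl _) x I.
by exists (FSetSub sA).
Unshelve. all: by end_near.
Qed.

Lemma grp_aux (T : Type) (mul : T -> T -> T) (inv : T -> T) (e : T) :
  (forall a b c, mul a (mul b c) = mul (mul a b) c) ->
  (forall a, mul e a = a /\ mul a e = a) ->
  (forall a, mul (inv a) a = e /\ mul a (inv a) = e) ->
  forall t k b, mul (mul b (inv k)) t = mul b (inv (mul (inv t) k)).
Proof.
move=> As Id Iv t k b.
have H : mul (mul (inv t) k) (mul (inv k) t) = e.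
  rewrite -As (As k) (Iv k).2 (Id t).1; exact: (Iv t).1.
have -> : inv (mul (inv t) k) = mul (inv k) t.
  set a := mul (inv t) k; set z := mul (inv k) t.
  by rewrite -[inv a](Id _).2 -H As (Iv a).1 (Id z).1.
by rewrite As.
Qed.

Theorem corollary2 (T : topologicalType) (X : uniformType)
    (mul : T -> T -> T) (inv : T -> T) (e : T) (act : T -> X -> X) :
  is_topological_group mul inv e -> hausdorff_space T ->
  compact [set: X] -> hausdorff_space X ->
  is_flow mul e act ->
  unif_left_synd_stable mul act ->
  ap_flow mul act.
Proof.
move=> [As Id Iv cmul cinv] _ cX _ [_ act_e act_m] stab alpha ealpha.
pose eta1 := split_ent alpha.
have eeta1 : entourage eta1 by exact: entourage_split_ent.
pose eta := split_ent eta1.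
have eeta : entourage eta by exact: entourage_split_ent.
have eeta' := entourage_invI eeta.
set eta' := (X in entourage X) in eeta'.
have [delta [edelta [A [[K [cK hK]] hA]]]] := stab eta' eeta'.
have [S netS] := @net_lemma _ _ cX edelta.
have [E netE] := @net_lemma _ _ cX eeta'.
have [f hf] := choice (fun (p : T * S) => netE (act p.1 (val p.2))).
pose code (t : T) : {ffun S -> E} := [ffun i => f (t, i)].
have key : forall a b, A a -> A b -> code a = code b ->
    forall y, alpha (act a y, act b y).
  move=> a b Aa Ab cab y.
  have [s Ds] := netS y.
  have fab : f (a, s) = f (b, s).
    by have := congr1 (fun g : {ffun S -> E} => g s) cab; rewrite !ffunE.
  have [ha1 ha2] := hA a _ _ Aa Ds.
  have [hb1 hb2] := hA b _ _ Ab Ds.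
  have [ja1 ja2] := hf (a, s).
  have [jb1 jb2] := hf (b, s).
  rewrite /= fab in ja1 ja2.
  apply: (entourage_split (val (f (b, s)))) => //.
    apply: (entourage_split (act a (val s))) => //.
  by apply: (entourage_split (act b (val s))).
have hex : forall c : {ffun S -> E}, exists b,
    (exists a, A a /\ code a = c) -> A b /\ code b = c.
  move=> c; case: (pselect (exists a, A a /\ code a = c)) => [[a [Aa ca]]|na].
    by exists a.
  by exists e => h; exfalso; exact: na h.
have [rep hrep] := choice hex.
pose F := range rep.
have fF : finite_set F by apply: finite_image; exact: finite_finset.
pose K' := [set mul p.1 p.2 | p in F `*` (inv @` K)].
exists [set t | forall x, alpha (x, act t x)]; split; last by move=> x a; apply.
exists K'; split.
  apply: continuous_compact; first exact: continuous_subspaceT.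
  apply: compact_setX; first exact: finite_compact.
  by apply: continuous_compact => //; exact: continuous_subspaceT.
move=> t.
have [a [Aa [k Kk ka]]] := hK (inv t).
have [Ab cb] := hrep (code a) (ex_intro _ a (conj Aa erefl)).
set b := rep (code a) in Ab cb.
exists (mul (mul b (inv k)) t); split.
  exists (mul b (inv k)) => //.
  by exists (b, inv k) => //; split; [exists (code a) | exists k].
move=> x; rewrite (@grp_aux _ _ _ _ As Id Iv) ka act_m.
set y := act (inv a) x.
have hx : x = act a y by rewrite /y -act_m (Iv a).2 act_e.
rewrite {1}hx; exact: key a b Aa Ab (esym cb) y.
Qed.
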